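(* Let $\dot G\in\mathcal C_1\cup\mathcal C_4\cup\mathcal C_5$ be a connected, non-complete, $5$-regular and $1$ net-regular SRSG with parameters $(n,5,a,b,c)$. If $(a,b)=(2,0)$, then $4\mid n$.
   Context: A signed graph $\dot G=(G,\sigma)$ is a simple graph $G$ with $\sigma:E(G)\to\{\pm1\}$; adjacency matrix $A_{\dot G}$ has entries $\sigma(v_iv_j)$ for adjacent vertices and $0$ otherwise. Degree and connectedness refer to $G$; net-degree is $d^+(v)-d^-(v)$; $\rho$ net-regular means all net-degrees equal $\rho$. $\dot G$ on $n$ vertices is an SRSG if it is neither homogeneous complete nor edgeless and there are $r\in\mathbb N$, $a,b,c\in\mathbb Z$ with $(A^2_{\dot G})_{ii}=r$, $(A^2_{\dot G})_{ij}=a$ for positive edges, $b$ for negative edges, $c$ for distinct non-adjacent pairs; parameters $(n,r,a,b,c)$. Classes: $\mathcal C_1$: $a=-b$ and (complete, or non-complete with $c\neq0$); $\mathcal C_4$: $a\ne-b$, non-complete, $c=0$; $\mathcal C_5$: $a\neq-b$, non-complete, $c\notin\{0,\frac{a+b}{2}\}$. *)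

(* Defs.v *)
From HB Require Import structures.
From mathcomp Require Import all_boot all_order all_algebra.
Set Implicit Arguments. Unset Strict Implicit. Unset Printing Implicit Defensive.
Import Order.TTheory GRing.Theory Num.Theory.
Local Open Scope ring_scope.

(* A signed graph on the finite vertex type T is given by its (signed)
   adjacency matrix A : T -> T -> int, with entries in {-1,0,1},
   symmetric and with zero diagonal.  u,v adjacent iff A u v != 0;
   the edge is positive iff A u v = 1, negative iff A u v = -1. *)
Definition signed_graph (T : finType) (A : T -> T -> int) : Prop :=
  (forall u, A u u = 0) /\ (forall u v, A u v = A v u) /\
  (forall u v, A u v = 0 \/ A u v = 1 \/ A u v = -1).

Definition adj (T : finType) (A : T -> T -> int) (u v : T) : bool := A u v != 0.

Definition sq (T : finType) (A : T -> T -> int) (u v : T) : int :=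
  \sum_(w : T) A u w * A w v.

Definition degree (T : finType) (A : T -> T -> int) (v : T) : nat :=
  #|[set w | adj A v w]|.

Definition net_degree (T : finType) (A : T -> T -> int) (v : T) : int :=
  (#|[set w | A v w == 1]|%:Z - #|[set w | A v w == -1]|%:Z).

Definition regular (T : finType) (A : T -> T -> int) (r : nat) : Prop :=
  forall v, degree A v = r.

Definition net_regular (T : finType) (A : T -> T -> int) (rho : int) : Prop :=
  forall v, net_degree A v = rho.

Definition sg_connected (T : finType) (A : T -> T -> int) : Prop :=
  forall u v, connect (adj A) u v.

Definition complete (T : finType) (A : T -> T -> int) : Prop :=
  forall u v, u != v -> A u v != 0.

Definition edgeless (T : finType) (A : T -> T -> int) : Prop :=
  forall u v, A u v = 0.

Definition homogeneous_complete (T : finType) (A : T -> T -> int) : Prop :=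
  complete A /\
  ((forall u v, u != v -> A u v = 1) \/ (forall u v, u != v -> A u v = -1)).

Definition SRSG (T : finType) (A : T -> T -> int) (n r : nat) (a b c : int)
  : Prop :=
  #|T| = n /\
  ~ homogeneous_complete A /\
  ~ edgeless A /\
  (forall i, sq A i i = r%:Z) /\
  (forall i j, A i j = 1 -> sq A i j = a) /\
  (forall i j, A i j = -1 -> sq A i j = b) /\
  (forall i j, i != j -> A i j = 0 -> sq A i j = c).

Definition class_C1 (T : finType) (A : T -> T -> int) (a b c : int) : Prop :=
  a = - b /\ (complete A \/ (~ complete A /\ c <> 0)).

Definition class_C4 (T : finType) (A : T -> T -> int) (a b c : int) : Prop :=
  a <> - b /\ ~ complete A /\ c = 0.

(* c \notin {0, (a+b)/2}, written without division as 2c <> a+b *)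
Definition class_C5 (T : finType) (A : T -> T -> int) (a b c : int) : Prop :=
  a <> - b /\ ~ complete A /\ c <> 0 /\ 2 * c <> a + b.

(* Main.v *)
Require Import Defs.
From mathcomp Require Import all_boot all_order all_algebra zify.
Import GRing.Theory Num.Theory.
Local Open Scope ring_scope.

Lemma ind_sum (T : finType) (P : pred T) :
  \sum_(j : T) ((P j)%:R : int) = #|[set j | P j]|%:Z.
Proof.
rewrite -sum1dep_card -natz natr_sum [RHS]big_mkcond /=.
by apply: eq_bigr => j _; case: (P j).
Qed.

Lemma even_sym (T : finType) (f : T -> T -> nat) :
  (forall u v, f u v = f v u) -> (forall u, f u u = 0%N) ->
  ~~ odd (\sum_u \sum_v f u v).
Proof.
move=> fs f0.
set r := @enum_rank T.
have H : forall u, (\sum_v f u v = \sum_(v | (r u < r v)%N) f u v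
                     + \sum_(v | (r v < r u)%N) f u v)%N.
  move=> u; rewrite (bigID (fun v => (r u < r v)%N)) /=; congr (_ + _)%N.
  rewrite big_mkcond [in RHS]big_mkcond /=; apply: eq_bigr => v _.
  have [->|ne] := eqVneq v u; first by rewrite f0 !if_same.
  have ne' : (r u != r v).
    by apply/negP => /eqP /enum_rank_inj E; rewrite E eqxx in ne.
  by case: (ltngtP (r u) (r v)) => // /val_inj E; rewrite E eqxx in ne'.
rewrite (eq_bigr _ (fun u _ => H u)) big_split /=.
have -> : (\sum_u \sum_(v | (r v < r u)%N) f u v = \sum_u \sum_(v | (r u < r v)%N) f u v)%N.
  under eq_bigr do rewrite big_mkcond.
  rewrite exchange_big /=; apply: eq_bigr => u _.
  by rewrite [RHS]big_mkcond; apply: eq_bigr => v _; rewrite fs.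
by rewrite addnn odd_double.
Qed.

Lemma cases3 {x : int} : x = 0 \/ x = 1 \/ x = -1 -> 
  [/\ x = (x == 1)%:R - (x == -1)%:R, (x != 0)%:R = (x == 1)%:R + (x == -1)%:R :> int
   & (x == 0)%:R = 1 - (x != 0)%:R :> int].
Proof. by case=> [->|[->|->]]. Qed.

Theorem lemma3p6 (T : finType) (A : T -> T -> int) (n : nat) (a b c : int) :
  signed_graph A ->
  SRSG A n 5 a b c ->
  (class_C1 A a b c \/ class_C4 A a b c \/ class_C5 A a b c) ->
  sg_connected A ->
  ~ complete A ->
  regular A 5 ->
  net_regular A 1 ->
  (a, b) = (2, 0) ->
  (4 %| n)%N.
Proof.
move=> [A0 [As Av]] [cT [_ [_ [Hd [Ha [Hb Hc]]]]]] _ _ nc Hreg Hnet [ea eb].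
subst a b.
case: (pickP T) => [i _|T0]; last first.
  by rewrite -cT (eq_card0 T0).
have rowsum : forall w, \sum_j A w j = 1.
  move=> w; rewrite -(Hnet w) /net_degree -!ind_sum -sumrB.
  by apply: eq_bigr => j _; case: (cases3 (Av w j)).
set p := #|[set j | A i j == 1]|.
set m := #|[set j | A i j == -1]|.
set z0 := #|[set j | A i j == 0]|.
set z := #|[set j | (j != i) && (A i j == 0)]|.
have h1 : p%:Z - m%:Z = 1 by exact: Hnet i.
have h2 : 5 = p%:Z + m%:Z.
  have := Hreg i; rewrite /degree => <-.
  rewrite ?natz -!ind_sum -big_split /=.
  by apply: eq_bigr => j _; case: (cases3 (Av i j)).
have h3 : z0%:Z + (degree A i)%:Z = n%:Z.
  rewrite /degree -cT -cardsT -!ind_sum -big_split /=.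
  by apply: eq_bigr => j _; case: (cases3 (Av i j)) => _ _ ->; rewrite subrK.
have h4 : z%:Z + 1 = z0%:Z.
  have e1 : #|[set j | j == i]| = 1%N.
    by rewrite (_ : [set j | j == i] = [set i]) ?cards1 //; apply/setP=> j; rewrite !inE.
  have -> : (1 : int) = (#|[set j | j == i]|)%:Z by rewrite e1.
  rewrite -!ind_sum -big_split /=.
  apply: eq_bigr => j _; have [->|] := eqVneq j i; first by rewrite A0.
  by rewrite /= addr0.
have h5 : \sum_j sq A i j = 1.
  rewrite /sq exchange_big /=.
  under eq_bigr do rewrite -mulr_sumr rowsum mulr1.
  exact: rowsum.
have h6 : forall j, sq A i j = 5 * (j == i)%:R + 2 * (A i j == 1)%:R
            + c * ((j != i) && (A i j == 0))%:R.
  move=> j; have [->|ne] := eqVneq j i; first by rewrite Hd A0 eqxx /=; lia.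
  have ne' : (j == i) = false by apply/negbTE.
  case: (Av i j) => [e|[e|e]]; rewrite e /=.
  - rewrite Hc ?e //; [lia | by rewrite eq_sym].
  - rewrite Ha //; lia.
  - rewrite Hb //; lia.
have h7 : \sum_j sq A i j = 5 + 2 * p%:Z + c * z%:Z.
  under eq_bigr do rewrite h6.
  rewrite !big_split /= -!mulr_sumr !ind_sum.
  by rewrite (_ : [set j | j == i] = [set i]) ?cards1 //; apply/setP=> j; rewrite !inE.
rewrite Hreg in h3.
have hz : c * z%:Z = -10 by lia.
have hn : n = (z + 6)%N by lia.
have hev : ~~ odd (5 * n).
  have -> : (5 * n = \sum_u \sum_v nat_of_bool (adj A u v))%N.
    rewrite -cT mulnC -sum_nat_const; apply: eq_bigr => u _.
    by rewrite -(Hreg u) /degree -sum1dep_card big_mkcond; apply: eq_bigr => v _; case: ifP.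
  apply: even_sym => [u v|u]; first by rewrite /adj As.
  by rewrite /adj A0.
clearbody z.
have zle : (z <= 10)%N.
  clear -hz. have [cp|cn] := boolP (c < 0); nia.
rewrite hn; rewrite hn in hev.
clear -hz zle hev.
case: z zle hz hev => [|[|[|[|[|[|[|[|[|[|[|z]]]]]]]]]]] //= zle hz hev; lia.
Qed.
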